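(* For every integer $r\geq 3$ and every integer $n>6^r$, there exists a collection of $n$ matchings, each of size $n+\frac{1}{12r}n^{\frac{r-1}{r}}-1$, in an $r$-partite $r$-uniform hypergraph that does not admit a rainbow matching of size $n$.
   Context: A hypergraph is $r$-uniform if every edge contains exactly $r$ vertices. An $r$-uniform hypergraph is $r$-partite if its vertex set can be partitioned into $r$ sets $V_1,\dots,V_r$ such that every edge contains exactly one vertex from each $V_i$. A matching is a set of pairwise vertex-disjoint edges. Given a collection (repetitions allowed) of matchings $M_1,\dots,M_n$ in a hypergraph, a matching $M\subseteq \bigcup_{i=1}^n M_i$ is rainbow if there is an injection $\phi:M\to[n]$ such that every edge $e\in M$ belongs to $M_{\phi(e)}$. *)

(* Defs.v *)
From mathcomp Require Import all_boot.
From Stdlib Require Import Reals.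
Set Implicit Arguments. Unset Strict Implicit. Unset Printing Implicit Defensive.

(* An r-partite r-uniform hypergraph with parts V_1..V_r, each (w.l.o.g.)
   a copy of 'I_N: the vertex set is 'I_r x 'I_N, part i being {i} x 'I_N,
   and an edge is given by choosing one vertex e i in each part i. *)
Definition edge (r N : nat) := {ffun 'I_r -> 'I_N}.

(* A matching: pairwise vertex-disjoint edges (distinct edges share no vertex;
   two edges can only share a vertex inside a common part). *)
Definition is_matching (r N : nat) (M : {set edge r N}) : Prop :=
  forall e f, e \in M -> f \in M -> e <> f -> forall i, e i <> f i.

Definition is_rainbow (r N n : nat) (Ms : 'I_n -> {set edge r N})
    (M : {set edge r N}) : Prop :=
  is_matching M /\
  exists phi : edge r N -> 'I_n,
    {in M &, injective phi} /\ (forall e, e \in M -> e \in Ms (phi e)).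

(* Main.v *)
Require Import Defs.
From mathcomp Require Import all_boot zify.
Set Implicit Arguments. Unset Strict Implicit. Unset Printing Implicit Defensive.

Lemma minS k s c : minn (k.+1 - s) c = minn (k - s) c + ((s <= k) && (k < s + c)).
Proof. by case: (leqP s k) => /= H1; case: (ltnP k (s+c)) => /= H2; lia. Qed.

Lemma ind_false k s c : (k < s) || (s + c <= k) -> ((s <= k) && (k < s + c)) = false.
Proof. by case/orP => H; apply/negbTE/negP => /andP []; lia. Qed.

Lemma union_bound (T : finType) (X : {set T}) (E : nat -> {set T}) D :
  (forall p, p \in X -> exists2 k, k < D & p \in E k) -> #|X| <= \sum_(k < D) #|E k|.
Proof.
elim: D X => [|D IH] X HX.
  rewrite big_ord0 leqn0 cards_eq0; apply/eqP/setP => p; rewrite inE.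
  by apply/negP => /HX [].
rewrite big_ord_recr /= -(cardsID (E D) X) addnC.
apply: leq_add; last by apply: subset_leq_card; apply: subsetIr.
apply: IH => p; rewrite inE => /andP [pE pX].
have [k kD pk] := HX p pX.
exists k => //; have kn : k != D by apply/eqP => ek; rewrite -ek pk in pE.
by move: kD kn; rewrite ltnS leq_eqVlt => /orP [->|].
Qed.

Lemma digits_sum B L d : 0 < B -> d %% B ^ L = \sum_(j < L) ((d %/ B ^ j) %% B) * B ^ j.
Proof.
move=> B0; elim: L => [|L IH]; first by rewrite big_ord0 expn0 modn1.
rewrite big_ord_recr /= -IH.
have e1 : d = (d %/ B ^ L.+1) * B ^ L.+1 + ((d %/ B ^ L) %% B * B ^ L + d %% B ^ L).
  rewrite {1}(divn_eq d (B ^ L)) {1}(divn_eq (d %/ B ^ L) B).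
  by rewrite expnSr divnMA; nia.
rewrite {1}e1 modnMDl modn_small; first by rewrite addnC.
rewrite expnSr.
have h1 : d %% B ^ L < B ^ L by rewrite ltn_mod expn_gt0 B0.
have h2 : (d %/ B ^ L) %% B < B by rewrite ltn_mod.
nia.
Qed.

Lemma exit_step (T : finType) (S : {set T}) (f : nat -> T) D :
  f 0 \in S -> f D \notin S -> exists2 k, k < D & (f k \in S) && (f k.+1 \notin S).
Proof.
move=> h0; elim: D => [|D IH] hD; first by rewrite h0 in hD.
case hS: (f D \in S).
  by exists D => //; rewrite hS hD.
have [k kD hk] := IH (negbT hS); exists k => //; exact: ltnW.
Qed.

Section Core.
Variables (r M N : nat).
Hypotheses (r3 : 2 < r) (M0 : 0 < M) (N0 : 0 < N) (NB : N <= M.+1 ^ r.-1).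

Definition AA := M.*2.
Lemma AA_gt0 : 0 < AA. Proof. by rewrite /AA double_gt0. Qed.
Definition oA (k : nat) : 'I_AA := Ordinal (ltn_pmod k AA_gt0).
Definition oN (k : nat) : 'I_N := Ordinal (ltn_pmod k N0).
Definition U := ('I_AA * 'I_N)%type.

Local Notation B := M.+1.

Definition inc (i a : nat) : nat :=
  if i == r.-1 then B ^ (if a < M then r - 3 else r - 2) else B ^ (i - 2).
Definition Fm (i : nat) (u : U) : U :=
  if i == 0 then u else if i == 1 then (oA u.1.+1, u.2)
  else (u.1, oN (u.2 + inc i u.1)).

Definition dlt (x y : U) : nat := (y.2 + N - x.2) %% N.
Definition dig (d j : nat) : nat := (d %/ B ^ j) %% B.
Definition c1 (a : nat) := if a < M then r - 3 else r - 2.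
Definition c2 (a : nat) := if a < M then r - 2 else r - 3.
Definition s1 := (r - 2) * B.
Definition s2 := s1 + M.
Definition s3 := s2 + B.
Definition Dlen := s3 + AA.
Definition d2 (x y : U) := (y.1 + AA - (x.1 + M) %% AA) %% AA.

Definition wsum (x y : U) (k : nat) : nat :=
  \sum_(j < r - 3) minn (k - j * B) (dig (dlt x y) j) * B ^ j
  + minn (k - (r - 3) * B) (dig (dlt x y) (c1 x.1)) * B ^ (c1 x.1)
  + minn (k - s2) (dig (dlt x y) (c2 x.1)) * B ^ (c2 x.1).
Definition asum (x y : U) k := minn (k - s1) M + minn (k - s3) (d2 x y).
Definition pth (x y : U) k : U := (oA (x.1 + asum x y k), oN (x.2 + wsum x y k)).
Definition idx k := if k < (r - 3) * B then k %/ B + 2 else if k < s1 then r.-1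
  else if k < s2 then 1 else if k < s3 then r.-1 else 1.

Definition ind (s c k : nat) : bool := (s <= k) && (k < s + c).

Lemma dig_lt d j : dig d j < B. Proof. by rewrite /dig ltn_mod. Qed.

Lemma asum_S x y k : asum x y k.+1 = asum x y k + ind s1 M k + ind s3 (d2 x y) k.
Proof. by rewrite /asum !minS /ind; lia. Qed.

Lemma wsum_S x y k : wsum x y k.+1 = wsum x y k
  + \sum_(j < r - 3) ind (j * B) (dig (dlt x y) j) k * B ^ j
  + ind ((r - 3) * B) (dig (dlt x y) (c1 x.1)) k * B ^ (c1 x.1)
  + ind s2 (dig (dlt x y) (c2 x.1)) k * B ^ (c2 x.1).
Proof.
rewrite /wsum !minS.
under eq_bigr => j _ do rewrite minS mulnDl.
rewrite big_split /=; rewrite /ind; lia.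
Qed.


Lemma oA_S k : oA k.+1 = oA (oA k).+1.
Proof. by apply: val_inj => /=; rewrite -(addn1 k) -(addn1 (k %% AA)) modnDml. Qed.
Lemma oN_add k j : oN (k + j) = oN (oN k + j).
Proof. by apply: val_inj => /=; rewrite modnDml. Qed.

Lemma ind_F s c k : (k < s) || (s + c <= k) -> ind s c k = false.
Proof. by move=> H; rewrite /ind ind_false. Qed.

Lemma sum_ind0 (F : 'I_(r - 3) -> nat) (P : 'I_(r - 3) -> bool) :
  (forall j, P j = false) -> \sum_(j < r - 3) P j * F j = 0.
Proof. by move=> H; rewrite big1 // => j _; rewrite H. Qed.

Lemma pth_S x y k : pth x y k.+1 =
  (oA (x.1 + asum x y k + (ind s1 M k + ind s3 (d2 x y) k)),
   oN (x.2 + wsum x y k + (\sum_(j < r - 3) ind (j * B) (dig (dlt x y) j) k * B ^ j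
  + ind ((r - 3) * B) (dig (dlt x y) (c1 x.1)) k * B ^ (c1 x.1)
  + ind s2 (dig (dlt x y) (c2 x.1)) k * B ^ (c2 x.1)))).
Proof. by rewrite /pth asum_S wsum_S !addnA. Qed.


Lemma modAM a : a < AA -> ((a + M) %% AA < M) = ~~ (a < M).
Proof.
rewrite /AA => aA; case: (ltnP a M) => aM /=.
  by rewrite modn_small; lia.
have -> : a + M = (a - M) + M.*2 by lia.
by rewrite modnDr modn_small; lia.
Qed.

Lemma sB : s1 = (r - 3) * B + B.
Proof. rewrite /s1; have -> : r - 2 = (r - 3).+1 by lia. by rewrite mulSn addnC. Qed.

Lemma plain0 x y k : (r - 3) * B <= k ->
  \sum_(j < r - 3) ind (j * B) (dig (dlt x y) j) k * B ^ j = 0.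
Proof.
move=> hk; apply: sum_ind0 => j; apply: ind_F; apply/orP; right.
have := dig_lt (dlt x y) j; have := ltn_ord j; nia.
Qed.

Lemma asum0 x y k : k <= s1 -> asum x y k = 0.
Proof. rewrite /asum /s3 /s2 => hk; lia. Qed.

Lemma asumM x y k : s2 <= k <= s3 -> asum x y k = M.
Proof. rewrite /asum /s3 /s2 => hk; lia. Qed.

Lemma Lstep x y k : k < Dlen ->
  pth x y k.+1 = pth x y k \/ pth x y k.+1 = Fm (idx k) (pth x y k).
Proof.
move=> kD; rewrite pth_S.
have dg := dig_lt (dlt x y).
have sB' := sB.
rewrite /idx; case: ifP => k1.
-
  have j0lt : k %/ B < r - 3 by rewrite ltn_divLR.
  pose J0 : 'I_(r - 3) := Ordinal j0lt.
  have ek := divn_eq k B.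
  have rk : k %% B < B by rewrite ltn_mod.
  rewrite (ind_F (s := s1)); last by apply/orP; left; nia.
  rewrite (ind_F (s := s3)); last by apply/orP; left; rewrite /s3 /s2; nia.
  rewrite (ind_F (s := (r - 3) * B)); last by apply/orP; left.
  rewrite (ind_F (s := s2)); last by apply/orP; left; rewrite /s2; nia.
  rewrite (bigD1 J0) //= big1; last first.
    move=> j /negbTE jne; rewrite ind_F ?mul0n //.
    have jne' : (j : nat) != k %/ B.
      apply/eqP => ej; have e : j = J0 by apply: val_inj.
      by rewrite e eqxx in jne.
    have dj := dg j.
    case: (ltngtP j (k %/ B)) jne' => // hj _; apply/orP; [right|left]; nia.
  rewrite ?addn0 ?mul0n ?addn0.
  case: (ind _ _ _) => /=; [right|left]; last by rewrite mul0n addn0.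
  rewrite /Fm.
  have -> : (k %/ B + 2 == 0) = false by rewrite addn2.
  have -> : (k %/ B + 2 == 1) = false by rewrite addn2.
  rewrite /inc.
  have -> : (k %/ B + 2 == r.-1) = false by apply/negbTE; lia.
  rewrite addnK mul1n; congr (_, _).
  by rewrite oN_add.
have k1' : (r - 3) * B <= k by rewrite leqNgt k1.
rewrite plain0 // add0n.
have dg1 := dg (c1 x.1); have dg2 := dg (c2 x.1).
have sS : s1 <= s2 /\ s2 + B = s3 /\ s1 + M = s2 by rewrite /s3 /s2; lia.
case: ifP => k2.
- rewrite (ind_F (s := s1)); last by apply/orP; left.
  rewrite (ind_F (s := s3)); last by apply/orP; left; lia.
  rewrite (ind_F (s := s2)); last by apply/orP; left; lia.
  rewrite !addn0.
  case: (ind _ _ _) => /=; [right|left]; last by rewrite mul0n addn0.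
  rewrite /Fm.
  have -> : (r.-1 == 0) = false by apply/negbTE; lia.
  have -> : (r.-1 == 1) = false by apply/negbTE; lia.
  rewrite /inc eqxx mul1n /= asum0 ?addn0 ?(ltnW k2) //.
  by rewrite (modn_small (ltn_ord x.1)) /c1 oN_add.
have k2' : s1 <= k by rewrite leqNgt k2.
rewrite (ind_F (s := (r - 3) * B)); last by apply/orP; right; lia.
case: ifP => k3.
- rewrite (ind_F (s := s3)); last by apply/orP; left; lia.
  rewrite (ind_F (s := s2)); last by apply/orP; left; lia.
  have -> : ind s1 M k = true by rewrite /ind k2' /=; lia.
  right; rewrite /Fm /= !addn0.
  by rewrite addn1 oA_S.
have k3' : s2 <= k by rewrite leqNgt k3.
rewrite (ind_F (s := s1)); last by apply/orP; right; lia.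
case: ifP => k4.
- rewrite (ind_F (s := s3)); last by apply/orP; left; lia.
  rewrite !addn0 add0n.
  case: (ind _ _ _) => /=; [right|left]; last by rewrite mul0n addn0.
  rewrite /Fm.
  have -> : (r.-1 == 0) = false by apply/negbTE; lia.
  have -> : (r.-1 == 1) = false by apply/negbTE; lia.
  rewrite /inc eqxx mul1n /= asumM; last by apply/andP; split; lia.
  rewrite modAM ?ltn_ord // oN_add; congr (_, oN (_ + B ^ _)).
  by rewrite /c2; case: (x.1 < M).
have k4' : s3 <= k by rewrite leqNgt k4.
rewrite (ind_F (s := s2)); last by apply/orP; right; lia.
rewrite !addn0 add0n.
case: (ind _ _ _) => /=; [right|left]; last by rewrite addn0.
by rewrite /Fm /= addn1 oA_S.
Qed.

Lemma L0 (x y : U) : pth x y 0 = x.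
Proof.
rewrite /pth asum0 // /wsum big1 => [|j _]; last by rewrite sub0n min0n mul0n.
rewrite !sub0n !min0n !mul0n !addn0; case: x => a w /=.
by congr (_, _); apply: val_inj; rewrite /= modn_small.
Qed.

Lemma y2_eq (x y : U) : (x.2 + dlt x y) %% N = y.2.
Proof.
rewrite /dlt modnDmr.
have -> : x.2 + (y.2 + N - x.2) = y.2 + N by have := ltn_ord x.2; lia.
by rewrite modnDr modn_small.
Qed.

Lemma dlt_lt (x y : U) : dlt x y < N. Proof. by rewrite /dlt ltn_mod. Qed.

Lemma LD (x y : U) : pth x y Dlen = y.
Proof.
have d2lt : d2 x y < AA by rewrite /d2 ltn_mod AA_gt0.
have sS : s1 + M = s2 /\ s2 + B = s3 /\ s1 = (r - 2) * B by rewrite /s3 /s2 /s1; lia.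
have dg := dig_lt (dlt x y).
have ea : asum x y Dlen = M + d2 x y by rewrite /asum /Dlen; lia.
have ew : wsum x y Dlen = dlt x y.
  rewrite /wsum.
  rewrite (eq_bigr (fun j : 'I_(r - 3) => dig (dlt x y) j * B ^ j)); last first.
    move=> j _; congr (_ * _); apply/minn_idPr.
    have := dg j; have := ltn_ord j; rewrite /Dlen; nia.
  have -> : minn (Dlen - (r - 3) * B) (dig (dlt x y) (c1 x.1)) = dig (dlt x y) (c1 x.1).
    apply/minn_idPr; have := dg (c1 x.1); rewrite /Dlen; nia.
  have -> : minn (Dlen - s2) (dig (dlt x y) (c2 x.1)) = dig (dlt x y) (c2 x.1).
    apply/minn_idPr; have := dg (c2 x.1); rewrite /Dlen; nia.
  have e3 : (r - 3).+1 = r - 2 by lia.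
  have : dlt x y %% B ^ (r - 3).+2 = dlt x y.
    apply: modn_small; apply: leq_trans (dlt_lt x y) _.
    by have -> : (r - 3).+2 = r.-1 by lia.
  move=> hmod; apply: etrans _ hmod.
  rewrite digits_sum // !big_ord_recr /= e3.
  rewrite -!addnA; congr (_ + _).
  by rewrite /c1 /c2 /dig; case: (x.1 < M) => //; rewrite addnC.
rewrite /pth ea ew; clear ea ew dg; case: y d2lt => a' w' /= d2lt.
congr (_, _); apply: val_inj => /=; last exact: (y2_eq x (a', w')).
rewrite addnA -modnDml /d2 modnDmr.
have := ltn_ord a'; have : (x.1 + M) %% AA < AA by rewrite ltn_mod AA_gt0.
move=> h1 h2.
have -> : (x.1 + M) %% AA + (a' + AA - (x.1 + M) %% AA) = a' + AA by lia.
by rewrite modnDr modn_small.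
Qed.

Lemma asum_real (x y : U) k : pth x y k.+1 != pth x y k ->
  asum x y k = minn (k - s1) M + (k - s3).
Proof.
move=> hne.
have sS : s1 + M = s2 /\ s2 + B = s3 /\ s1 = (r - 3) * B + B.
  by rewrite /s3 /s2 sB; lia.
case: (ltnP k s3) => ks3; first by rewrite /asum; lia.
case: (ltnP (k - s3) (d2 x y)) => kd; first by rewrite /asum; lia.
move: hne; rewrite pth_S plain0; last by nia.
have dg := dig_lt (dlt x y).
rewrite (ind_F (s := s1)); last by apply/orP; right; lia.
rewrite (ind_F (s := s3)); last by apply/orP; right; lia.
rewrite (ind_F (s := (r - 3) * B)); last by apply/orP; right; have := dg (c1 x.1); lia.
rewrite (ind_F (s := s2)); last by apply/orP; right; have := dg (c2 x.1); lia.
by rewrite !mul0n !addn0 eqxx.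
Qed.

Lemma Linj (x y x' y' : U) k : pth x y k.+1 != pth x y k -> pth x' y' k.+1 != pth x' y' k ->
  pth x y k = pth x' y' k -> y.1 = y'.1 -> dlt x y = dlt x' y' -> (x, y) = (x', y').
Proof.
move=> h1 h2 e ey1 ed.
have [e1 e2] : (pth x y k).1 = (pth x' y' k).1 /\ (pth x y k).2 = (pth x' y' k).2 by rewrite e.
have ex1 : x.1 = x'.1.
  move: e1; rewrite /pth /= asum_real // asum_real // => /(congr1 val) /= /eqP.
  rewrite eqn_modDr !modn_small ?ltn_ord // => /eqP ex; exact: val_inj.
have ex2 : x.2 = x'.2.
  move: e2; rewrite /pth /= /wsum ed ex1 => /(congr1 val) /= /eqP.
  rewrite -!addnA eqn_modDr !modn_small ?ltn_ord // => /eqP ex; exact: val_inj.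
have ex : x = x' by case: x x' ex1 ex2 {h1 h2 e e1 e2 ed} => a w [a0 w0] /= -> ->.
have ey2 : y.2 = y'.2.
  apply: ord_inj; rewrite -(y2_eq x y) -(y2_eq x' y') ed ex //.
have ey : y = y' by case: y y' ey1 ey2 {h1 h2 e e1 e2 ed} => a w [a0 w0] /= -> ->.
by rewrite ex ey.
Qed.

Lemma idx_range k : 0 < idx k < r.
Proof.
rewrite /idx; case: ifP => [h|_]; last by repeat case: ifP => _; lia.
have : k %/ B < r - 3 by rewrite ltn_divLR.
move: (k %/ B) => q; lia.
Qed.

Lemma core (S : {set U}) g :
  (forall i, 0 < i < r -> #|[set v in S | Fm i v \notin S]| <= g) ->
  #|S| * #|~: S| <= Dlen * (AA * N) * g.
Proof.
move=> Hg; rewrite -cardsX.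
pose E k := [set p in setX S (~: S) | (pth p.1 p.2 k \in S) && (pth p.1 p.2 k.+1 \notin S)].
apply: leq_trans (union_bound (E := E) (D := Dlen) _) _.
  move=> [x y]; rewrite inE /= inE => /andP [xS yS].
  have [k kD hk] : exists2 k, k < Dlen & (pth x y k \in S) && (pth x y k.+1 \notin S).
    by apply: exit_step; rewrite ?L0 ?LD.
  by exists k => //; rewrite !inE /= xS yS hk.
have -> : Dlen * (AA * N) * g = \sum_(k < Dlen) (g * (AA * N)).
  by rewrite sum_nat_const card_ord; lia.
apply: leq_sum => k _.
pose phi (p : U * U) : U * U := (pth p.1 p.2 k, (p.2.1, oN (dlt p.1 p.2))).
have Ek p : p \in E k -> pth p.1 p.2 k.+1 != pth p.1 p.2 k.
  rewrite !inE => /andP [_ /andP [h1 h2]]; apply/eqP => e; by rewrite e h1 in h2.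
rewrite -(card_in_imset (f := phi)); last first.
  move=> [x y] [x' y'] hp hp' /= [ea ew ey1 ed].
  have e : pth x y k = pth x' y' k by congr (_, _); apply: val_inj.
  apply: (@Linj x y x' y' k (Ek _ hp) (Ek _ hp') e ey1).
  by move: ed; rewrite !modn_small ?dlt_lt.
pose Bd := [set v in S | Fm (idx k) v \notin S].
apply: leq_trans (subset_leq_card (_ : phi @: E k \subset setX Bd [set: U])) _.
  apply/subsetP => q /imsetP [p hp ->]; rewrite !inE andbT /=.
  have hp' := hp; rewrite !inE in hp'; case/andP: hp' => _ /andP [h1 h2].
  rewrite h1 /=.
  case: (Lstep p.1 p.2 (ltn_ord k)) => e; first by rewrite e h1 in h2.
  by rewrite -e.
rewrite cardsX cardsT card_prod !card_ord leq_mul2r Hg ?idx_range ?orbT //.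
Qed.

Lemma Fm0 u : Fm 0 u = u. Proof. by []. Qed.

Lemma Fm_inj i : injective (Fm i).
Proof.
move=> [a w] [a' w']; rewrite /Fm /=; case: ifP => _ //; case: ifP => _.
  move=> e; have /= /eqP := congr1 (fun p => val p.1) e.
  have /= ew := congr1 (fun p => p.2) e.
  rewrite -(addn1 a) -(addn1 a') eqn_modDr.
  by rewrite !modn_small ?ltn_ord // => /eqP ea; rewrite ew; congr (_, _); apply: val_inj.
move=> e; have /= ea := congr1 (fun p => p.1) e.
have /= /eqP := congr1 (fun p => val p.2) e.
subst a'; rewrite eqn_modDr !modn_small ?ltn_ord //.
by move=> /eqP ew; congr (_, _); apply: val_inj.
Qed.

Lemma Fm1_neq u : Fm 1 u != u.
Proof.
case: u => a w; rewrite /Fm /=; apply/eqP => e.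
have /= := congr1 (fun p => val p.1) e.
have := ltn_ord a; rewrite /AA => ha.
case: (ltnP a.+1 M.*2) => h; first by rewrite modn_small // => /esym; exact: n_Sn.
have -> : a.+1 = M.*2 by apply/eqP; rewrite eqn_leq h andbT.
rewrite modnn => e0; move: h ha; rewrite -e0; lia.
Qed.

End Core.
Lemma t1 M : 5 < M -> 18 * (M * M) + 15 * M <= 24 * (M * (2 * M - 1)) + 9 * M + 1.
Proof. move=> h; have [k ->] : exists k, M = k + 6 by exists (M - 6); lia. have -> : 2 * (k + 6) - 1 = 2 * k + 11 by lia. nia. Qed.
Lemma t2 r M : 2 < r -> 0 < M -> (r - 1) * M.+1 + 3 * M + (r - 1) * (2 * M - 1) = 3 * (r * M).
Proof. move=> h hM; have [k ->] : exists k, r = k + 3 by exists (r - 3); lia.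
have -> : k + 3 - 1 = k + 2 by lia.
case: M hM => [|M] hM; first by lia.
have -> : 2 * M.+1 - 1 = 2 * M + 1 by lia. lia. Qed.

Lemma ar_eD r M : 2 < r -> (r - 2) * M.+1 + M + M.+1 + M.*2 = (r - 1) * M.+1 + 3 * M.
Proof. move=> r3; have -> : r - 1 = (r - 2).+1 by lia. rewrite mulSn; lia. Qed.

Lemma ar_A X mZ s : mZ <= X -> X <= s <= X + mZ -> X * (X - mZ) <= s * (2 * X - s).
Proof.
move=> h /andP [h1 h2]; have [t et] : exists t, s = X + t by exists (s - X); lia.
subst s.
have [u eX] : exists u, X = mZ + u by exists (X - mZ); lia.
have [w eZ] : exists w, mZ = t + w by exists (mZ - t); lia.
subst X mZ.
have -> : t + w + u - (t + w) = u by lia.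
have -> : 2 * (t + w + u) - (t + w + u + t) = w + u by lia.
nia.
Qed.

Lemma ar_B r M n X mZ : 2 < r -> 5 < M -> 36 * M <= n -> mZ < 2 * M -> mZ <= X ->
  n <= 2 * X + mZ -> ((r - 1) * M.+1 + 3 * M) * n < 6 * r * M * (X - mZ).
Proof.
move=> r3 M6 n36 hmZ hX hn.
set Y := X - mZ.
have hY : n <= 2 * Y + 3 * mZ by rewrite /Y; lia.
have h1 : 3 * (r * M * n) <= 6 * (r * M * Y) + 9 * (r * M * mZ).
  have := leq_mul (leqnn (r * M)) hY; lia.
have h2 : 9 * (r * M * mZ) + 9 * (r * M) <= 18 * (r * M * M).
  have := leq_mul (leqnn (r * M)) hmZ; lia.
have h3 : 18 * (r * M * M) < (r - 1) * (2 * M - 1) * n + 9 * (r * M).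
  have e1 : 24 * (r * M) <= (r - 1) * n.
    have := leq_mul (leqnn (r - 1)) n36.
    have : 24 * r <= 36 * (r - 1) by lia.
    move=> h h'; apply: leq_trans h'; have := leq_mul h (leqnn M); lia.
  have := leq_mul e1 (leqnn (2 * M - 1)).
  have := leq_mul (leqnn r) (@t1 M M6).
  have : r <= r * M by rewrite leq_pmulr; lia.
  lia.
have h4 : ((r - 1) * M.+1 + 3 * M) * n + (r - 1) * (2 * M - 1) * n = 3 * (r * M * n).
  rewrite -mulnDl t2 //; lia.
lia.
Qed.

Lemma arith (n r M q NN mZ s g : nat) : 2 < r -> 5 < M -> 36 * M <= n ->
  12 * r * M * q <= n -> n + q = M.*2 * NN + mZ -> mZ < M.*2 ->
  NN * M <= s <= NN * M + mZ -> g <= q ->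
  s * (M.*2 * NN - s) <= ((r - 2) * M.+1 + M + M.+1 + M.*2) * (M.*2 * NN) * g -> False.
Proof.
move=> r3 M6 n36 hq hT hmZ hs hg hcore.
rewrite ar_eD // in hcore.
set X := NN * M in hs.
have e2X : M.*2 * NN = 2 * X by rewrite /X; lia.
rewrite e2X in hcore hT.
set D := (r - 1) * M.+1 + 3 * M in hcore.
have XmZ : mZ <= X by lia.
have hA := @ar_A X mZ s XmZ hs.
have hB : D * n < 6 * r * M * (X - mZ) by apply: ar_B => //; lia.
have hC : D * (12 * r * M * q) <= D * n by apply: leq_mul.
have hD : 2 * D * q < X - mZ.
  have h : 6 * r * M * (2 * D * q) < 6 * r * M * (X - mZ).
    apply: leq_ltn_trans hB; apply: leq_trans hC; lia.
  by rewrite ltn_pmul2l in h; [|rewrite !muln_gt0; apply/andP; split; lia].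
have hE : D * (2 * X) * g <= D * (2 * X) * q by rewrite leq_mul2l hg orbT.
have X0 : 0 < X by lia.
have hF : X * (2 * D * q) < X * (X - mZ) by rewrite ltn_pmul2l.
lia.
Qed.

Lemma card_sumset (T1 T2 : finType) (X : {set T1 + T2}) :
  #|X| = #|[set u | inl u \in X]| + #|[set z | inr z \in X]|.
Proof.
have eX : X = inl @: [set u | inl u \in X] :|: inr @: [set z | inr z \in X].
  apply/setP => -[u|z]; rewrite !inE.
    apply/idP/orP => [h|[/imsetP [u' ] |/imsetP [z' ]]]; first by left; apply/imsetP; exists u; rewrite ?inE.
      by rewrite inE => h [->].
    by [].
  apply/idP/orP => [h|[/imsetP [u' ] |/imsetP [z' ]]]; first by right; apply/imsetP; exists z; rewrite ?inE.
    by [].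
  by rewrite inE => h [->].
rewrite {1}eX cardsU.
have -> : inl @: [set u | inl u \in X] :&: inr @: [set z | inr z \in X] = set0.
  apply/setP => p; rewrite !inE; apply/negP => /andP [/imsetP [u _ ->] /imsetP [z _ e]].
  discriminate.
rewrite cards0 subn0 !card_imset //.
  by move=> a b [].
by move=> a b [].
Qed.

Lemma card_ltn_set n a : a <= n -> #|[set i : 'I_n | i < a]| = a.
Proof.
move=> an.
have -> : [set i : 'I_n | i < a] = widen_ord an @: [set: 'I_a].
  apply/setP => i; rewrite !inE; apply/idP/imsetP => [h|[j _ ->]]; last exact: ltn_ord j.
  by exists (Ordinal h) => //; apply: val_inj.
by rewrite card_imset ?cardsT ?card_ord // => j k /(congr1 val) /= /val_inj.
Qed.

Section Main.
Variables (n r M : nat).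
Hypotheses (r3 : 2 < r) (M6 : 5 < M) (hMr : M ^ r <= n) (hMr' : n < M.+1 ^ r).

Lemma Mpos : 0 < M. Proof. lia. Qed.

Definition q := n %/ (12 * r * M).
Definition T := n + q.
Definition NN := T %/ M.*2.
Definition mZ := T %% M.*2.
Definition bb := NN * M + mZ.
Definition aa := n - bb.

Lemma n36 : 36 * M <= n.
Proof.
apply: leq_trans hMr; apply: leq_trans (leq_pexp2l Mpos (_ : 3 <= r)) => //.
rewrite !expnS expn0 muln1 mulnA leq_mul2r; apply/orP; right.
by have := leq_mul M6 M6.
Qed.

Lemma hq : 12 * r * M * q <= n.
Proof. by rewrite mulnC leq_divM. Qed.

Lemma hT : T = M.*2 * NN + mZ.
Proof. by rewrite /NN /mZ mulnC -divn_eq. Qed.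

Lemma hmZ : mZ < M.*2.
Proof. by rewrite /mZ ltn_mod double_gt0 Mpos. Qed.

Lemma bb_le : bb <= n.
Proof.
have h1 := hT; have h2 := hq; have h3 := n36; have h4 := hmZ.
have h5 : 216 * q <= 12 * r * M * q.
  rewrite leq_mul2r; apply/orP; right.
  have : 18 <= r * M by have := leq_mul (_ : 3 <= r) (_ : 6 <= M); apply.
  lia.
rewrite /bb /T in h1 *; lia.
Qed.

Lemma NN_gt0 : 0 < NN.
Proof.
rewrite /NN divn_gt0 ?double_gt0 ?Mpos //.
have := n36; rewrite /T; lia.
Qed.

Lemma NN_le : NN <= M.+1 ^ r.-1.
Proof.
set X := M.+1 ^ r.-1.
have h1 : NN * M.*2 <= T by rewrite /NN leq_divM.
have h2 : T * M <= n * M.+1.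
  have := hq; rewrite /T mulnDl mulnS => h.
  have h' : 1 * (M * q) <= 12 * r * (M * q) by apply: leq_mul => //; lia.
  lia.
have h3 : n * M.+1 < M.+1 ^ r * M.+1 by rewrite ltn_pmul2r.
have h4 : M.+1 ^ r = M.+1 * X by rewrite /X -expnS; congr (_ ^ _); lia.
have h5 : M.+1 * M.+1 <= 2 * (M * M).
  have [k ->] : exists k, M = k + 6 by exists (M - 6); lia.
  nia.
have h6 := leq_mul h1 (leqnn M).
have h7 := leq_mul h5 (leqnn X).
rewrite h4 in h3.
have h8 : NN * (2 * (M * M)) < X * (2 * (M * M)) by lia.
by rewrite ltn_pmul2r ?muln_gt0 ?Mpos in h8; [apply: ltnW|].
Qed.

Definition UU := U M NN.
Definition F (i : nat) : UU -> UU := Fm r Mpos NN_gt0 i.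
Definition V := (UU + 'I_mZ)%type.
Definition P := (V + 'I_mZ)%type.
Definition Nv := #|{: P}|.
Definition vA (y : V) : P := inl y.
Definition vB (i : 'I_r) (x : V) : P :=
  match x with inl u => inl (inl (F i u)) | inr z => if (i : nat) == 1 then inr z else inl (inr z) end.
Definition mkA (y : V) : edge r Nv := [ffun i => enum_rank (vA y)].
Definition mkB (x : V) : edge r Nv := [ffun i => enum_rank (vB i x)].
Definition SA : {set edge r Nv} := mkA @: [set: V].
Definition SB : {set edge r Nv} := mkB @: [set: V].
Definition Ms (i : 'I_n) := if i < aa then SA else SB.

Lemma r0 : 0 < r. Proof. lia. Qed.
Lemma r1 : 1 < r. Proof. lia. Qed.
Definition i0 : 'I_r := Ordinal r0.
Definition i1 : 'I_r := Ordinal r1.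

Lemma vB0 x : vB i0 x = match x with inl u => inl (inl u) | inr z => inl (inr z) end.
Proof. by case: x. Qed.

Lemma mkA_inj : injective mkA.
Proof.
move=> y y' /(congr1 (fun e : edge r Nv => e i0)); rewrite !ffunE.
by move/enum_rank_inj => [].
Qed.

Lemma mkB_inj : injective mkB.
Proof.
move=> x x' /(congr1 (fun e : edge r Nv => e i0)); rewrite !ffunE.
move/enum_rank_inj; rewrite !vB0.
by case: x x' => [u|z] [u'|z'] // [] ->.
Qed.

Lemma AB_neq x y : mkA y != mkB x.
Proof.
apply/eqP => e.
have e0 := congr1 (fun e : edge r Nv => e i0) e.
have e1 := congr1 (fun e : edge r Nv => e i1) e.
rewrite /= !ffunE in e0 e1.
move: e0 e1 => /enum_rank_inj e0 /enum_rank_inj e1.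
have e2 : vB i0 x = vB i1 x by rewrite -e0 -e1.
rewrite vB0 {e0 e1 e} in e2.
case: x e2 => [u|z] /=; last by [].
move=> -[] e3.
have h := Fm1_neq r3 Mpos NN_gt0 NN_le u.
change (is_true (F 1 u != u)) in h.
by rewrite -e3 eqxx in h.
Qed.

Lemma SA_match : is_matching SA.
Proof.
move=> e f /imsetP [y _ ->] /imsetP [y' _ ->] ne i; rewrite !ffunE.
by move/enum_rank_inj => [] ey; apply: ne; rewrite ey.
Qed.

Lemma SB_match : is_matching SB.
Proof.
move=> e f /imsetP [x _ ->] /imsetP [x' _ ->] ne i; rewrite !ffunE.
move/enum_rank_inj => e'; apply: ne; congr mkB.
case: x x' e' => [u|z] [u'|z'] /=.
- by move=> [] /Fm_inj ->.
- by case: ifP.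
- by case: ifP.
- by case: ifP => _ [] ->.
Qed.

Lemma card_V : #|{: V}| = T.
Proof. by rewrite card_sum card_prod !card_ord hT /AA. Qed.

Lemma card_SA : #|SA| = T.
Proof. by rewrite card_imset ?cardsT ?card_V //; apply: mkA_inj. Qed.

Lemma card_SB : #|SB| = T.
Proof. by rewrite card_imset ?cardsT ?card_V //; apply: mkB_inj. Qed.

Lemma no_rainbow (Mset : {set edge r Nv}) : is_rainbow Ms Mset -> #|Mset| = n -> False.
Proof.
case=> Hmat [phi [phi_inj phi_in]] Hcard.
have hb := bb_le.
have himg : phi @: Mset = [set: 'I_n].
  apply/eqP; rewrite eqEcard subsetT cardsT card_ord card_in_imset //=.
  by rewrite Hcard.
set MA := [set e in Mset | e \in SA].
set MB := [set e in Mset | e \in SB].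
have ha : aa <= n by rewrite /aa leq_subr.
have eaa : aa = n - bb by [].
have hA : aa <= #|MA|.
  rewrite -(card_ltn_set ha).
  apply: leq_trans (leq_imset_card phi MA).
  apply: subset_leq_card; apply/subsetP => i; rewrite inE => ia.
  have : i \in phi @: Mset by rewrite himg inE.
  case/imsetP => e eM ei; apply/imsetP; exists e => //.
  by rewrite inE eM /=; have := phi_in e eM; rewrite /Ms -ei ia.
have hB : bb <= #|MB|.
  have eY : #|[set i : 'I_n | aa <= i]| = bb.
    have := cardsC [set i : 'I_n | i < aa]; rewrite card_ltn_set // card_ord.
    have -> : ~: [set i : 'I_n | i < aa] = [set i : 'I_n | aa <= i].
      by apply/setP => i; rewrite !inE -leqNgt.
    rewrite /aa; lia.
  rewrite -eY.
  apply: leq_trans (leq_imset_card phi MB).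
  apply: subset_leq_card; apply/subsetP => i; rewrite inE => ia.
  have : i \in phi @: Mset by rewrite himg inE.
  case/imsetP => e eM ei; apply/imsetP; exists e => //.
  rewrite inE eM /=; have := phi_in e eM; rewrite /Ms -ei.
  by rewrite ltnNge ia.
have hAB : #|MA| + #|MB| <= n.
  rewrite -Hcard -cardsUI.
  have -> : MA :&: MB = set0.
    apply/setP => e; rewrite !inE; apply/negP => /andP [/andP [_ /imsetP [y _ ey]] /andP [_ /imsetP [x _ ex]]].
    by have := AB_neq x y; rewrite -ey -ex eqxx.
  rewrite cards0 addn0; apply: subset_leq_card; apply/subsetP => e.
  by rewrite !inE => /orP [] /andP [].
set Sidx := [set x : V | mkB x \in Mset].
have cS : #|Sidx| = bb.
  have -> : #|Sidx| = #|MB|.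
    have eMB : MB = mkB @: Sidx.
      apply/setP => e; rewrite !inE.
      apply/andP/imsetP => [[eM /imsetP [x _ ex]]|[x xS ->]]; first by exists x; rewrite ?inE -?ex.
      by rewrite inE in xS; split => //; apply/imsetP; exists x.
    by rewrite eMB card_imset //; apply: mkB_inj.
  lia.
set TA := [set y : V | mkA y \in Mset].
have cT : aa <= #|TA|.
  have -> : #|TA| = #|MA|.
    have eMA : MA = mkA @: TA.
      apply/setP => e; rewrite !inE.
      apply/andP/imsetP => [[eM /imsetP [x _ ex]]|[x xS ->]]; first by exists x; rewrite ?inE -?ex.
      by rewrite inE in xS; split => //; apply/imsetP; exists x.
    by rewrite eMA card_imset //; apply: mkA_inj.
  done.
set SU := [set u | inl u \in Sidx].
set SZ := [set z | inr z \in Sidx].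
have cSS : #|Sidx| = #|SU| + #|SZ| by apply: card_sumset.
have hSZ : #|SZ| <= mZ by rewrite -[X in _ <= X]card_ord max_card.
set G := \bigcup_(i < r) (F i @: SU).
have SUG : SU \subset G.
  apply/subsetP => u uS; apply/bigcupP; exists i0 => //; apply/imsetP; exists u => //.
set g := #|G :\: SU|.
have cG : #|G| = #|SU| + g by rewrite -(cardsID SU G) (setIidPr SUG).
set NB := [set y : V | match y with inl u => u \in G | inr z => z \in SZ end].
have cNB : #|NB| = #|G| + #|SZ|.
  by rewrite card_sumset; congr (_ + _); apply: eq_card => ?; rewrite !inE.
have sub : TA \subset ~: NB.
  apply/subsetP => y; rewrite !inE => yT; apply/negP => yN.
  case: y yT yN => [u|z] yT.
    case/bigcupP => i _ /imsetP [u0 u0S eu].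
    rewrite inE inE in u0S.
    have := Hmat _ _ yT u0S (elimTF eqP (negbTE (AB_neq _ _))) i.
    by rewrite !ffunE /vA /vB eu.
  rewrite inE inE => zS.
  have := Hmat _ _ yT zS (elimTF eqP (negbTE (AB_neq _ _))) i0.
  by rewrite !ffunE vB0.
have hg : g <= q.
  have h1 := subset_leq_card sub.
  have h2 := cardsC NB; rewrite card_V cNB cG /T in h2.
  lia.
have Hcore := core r3 (M0 := Mpos) (N0 := NN_gt0) NN_le (S := SU) (g := g).
have Hc : #|SU| * #|~: SU| <= Dlen r M * (AA M * NN) * g.
  apply: Hcore => i /andP [i0 ir].
  set Bd := [set v in SU | _].
  rewrite -(card_imset Bd (@Fm_inj r M NN Mpos NN_gt0 i)).
  apply: subset_leq_card; apply/subsetP => w /imsetP [v]; rewrite inE => /andP [vS vN] ->.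
  rewrite inE vN /=; apply/bigcupP; exists (Ordinal ir) => //; apply/imsetP; exists v => //.
have eC : #|~: SU| = AA M * NN - #|SU|.
  by have := cardsC SU; rewrite card_prod !card_ord; lia.
rewrite eC /Dlen /s3 /s2 /s1 /AA in Hc.
apply: (@arith n r M q NN mZ #|SU| g r3 M6 n36 hq _ hmZ _ hg Hc).
  by rewrite -hT.
rewrite /bb in cS; lia.
Qed.

End Main.

Lemma powE (a b : nat) : Nat.pow a b = expn a b.
Proof. elim: b => [|b IH] //=; by rewrite expnS IH. Qed.

Lemma iroot (n r : nat) : 0 < r -> exists M, (expn M r <= n) && (n < expn M.+1 r).
Proof.
move=> r0; elim: n => [|n [M /andP [h1 h2]]].
  by exists 0; rewrite exp0n // exp1n.
case: (leqP (expn M.+1 r) n.+1) => h.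
  exists M.+1; rewrite h /=.
  have e : n.+1 = expn M.+1 r by apply/eqP; rewrite eqn_leq h h2.
  by rewrite e ltn_exp2r.
by exists M; rewrite h andbT; apply: leq_trans h1 _.
Qed.

From Stdlib Require Import Reals Lra.

Lemma INR_expn (m k : nat) : INR (expn m k) = (INR m ^ k)%R.
Proof.
elim: k => [|k IH]; first by rewrite expn0 /=.
by rewrite expnS mult_INR IH /=.
Qed.

Lemma real_part (n r M q : nat) : (0 < r)%N -> (0 < M)%N -> (expn M r <= n)%N ->
  (n < 12 * r * M * q.+1)%N ->
  (INR (n + q) >= INR n + / (12 * INR r) * Rpower (INR n) ((INR r - 1) / INR r) - 1)%R.
Proof.
move=> r0 M0 hM hn.
have rr0 : (0 < INR r)%R by apply: lt_0_INR; apply/ltP.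
have m0 : (0 < INR M)%R by apply: lt_0_INR; apply/ltP.
have hMr : (INR M ^ r <= INR n)%R by rewrite -INR_expn; apply: le_INR; apply/leP.
have mr0 : (0 < INR M ^ r)%R by apply: pow_lt.
have x0 : (0 < INR n)%R by lra.
have h2 : (INR M <= Rpower (INR n) (/ INR r))%R.
  have -> : INR M = Rpower (INR M ^ r) (/ INR r).
    rewrite -Rpower_pow // Rpower_mult Rinv_r ?Rpower_1 //; lra.
  apply: Rle_Rpower_l; [left; apply: Rinv_0_lt_compat|]; lra.
have h3 : (Rpower (INR n) ((INR r - 1) / INR r) * Rpower (INR n) (/ INR r) = INR n)%R.
  rewrite -Rpower_plus.
  have -> : ((INR r - 1) / INR r + / INR r = 1)%R by field; lra.
  by rewrite Rpower_1.
have hq : (INR n < 12 * INR r * INR M * (INR q + 1))%R.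
  have := lt_INR _ _ (ltP hn); rewrite -!multE !mult_INR S_INR.
  have -> : (INR 11 + 1 = 12)%R by rewrite INR_IZR_INZ /=; lra.
  by rewrite S_INR.
have p0 : (0 < Rpower (INR n) (/ INR r))%R by rewrite /Rpower; apply: exp_pos.
set P := Rpower (INR n) ((INR r - 1) / INR r) in h3 *.
set Q := Rpower (INR n) (/ INR r) in h2 h3 p0 *.
have hP : (P * INR M <= INR n)%R.
  rewrite -h3; apply: Rmult_le_compat_l => //; rewrite /P /Rpower; left; apply: exp_pos.
rewrite plus_INR.
have : (/ (12 * INR r) * P <= INR q + 1)%R.
  apply: (Rmult_le_reg_l (12 * INR r * INR M)); first by nra.
  have e : (12 * INR r * INR M * (/ (12 * INR r) * P) = P * INR M)%R by field; lra.
  rewrite e; nra.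
lra.
Qed.

Unset Implicit Arguments.

Theorem theorem2p5 (r n : nat) :
  (3 <= r)%N -> (6 ^ r < n)%N ->
  exists (N : nat) (H : {set edge r N}) (Ms : 'I_n -> {set edge r N}),
    (forall i : 'I_n,
        Ms i \subset H /\ is_matching (Ms i) /\
        (INR #|Ms i| >= INR n + / (12 * INR r) * Rpower (INR n) ((INR r - 1) / INR r) - 1)%R)
    /\ ~ (exists M : {set edge r N}, is_rainbow Ms M /\ #|M| = n).
Proof.
move=> r3 hn.
rewrite powE in hn.
have r0 : (0 < r)%N by lia.
have [M /andP [hMr hMr']] := iroot n r0.
have M6 : (5 < M)%N.
  rewrite ltnNge; apply/negP => hM.
  have : (expn M.+1 r <= expn 6 r)%N by rewrite leq_exp2r.
  move: hn hMr'; lia.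
exists (Nv n r M), (SA n r M :|: SB r3 M6 hMr hMr'), (Ms r3 M6 hMr hMr').
have hreal : (INR (T n r M) >= INR n + / (12 * INR r) * Rpower (INR n) ((INR r - 1) / INR r) - 1)%R.
  have M0 : (0 < M)%N by lia.
  rewrite /T; apply: (@real_part n r M (q n r M)) => //.
  by rewrite /q mulnC ltn_ceil // !muln_gt0 r0 M0.
split.
  move=> i; rewrite /Ms; case: ifP => _.
    split; first exact: subsetUl.
    by split; [exact: SA_match | rewrite (card_SA r3 M6 hMr hMr')].
  split; first exact: subsetUr.
  by split; [exact: SB_match | rewrite (card_SB r3 M6 hMr hMr')].
case=> Mset [hR hC]; exact: no_rainbow hR hC.
Qed.
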